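(* Let $k\ge3$ and let $G=(V,E)$ be a $k$-uniform hyperstar of size $d\ge2$ with $V=[n]$ and heart the vertex $1$, and let $\mathcal L$ be its Laplacian tensor. Suppose $(\lambda,\mathbf x)$ is an H-eigenpair of $\mathcal L$ with $\lambda\neq1$. Then: (i) If $i,j\ge2$ lie in a common edge, then $x_i=x_j$ when $k$ is odd and $|x_i|=|x_j|$ when $k$ is even. (ii) If $i,j\ge2$ and $x_i\neq0$, $x_j\neq0$, then $x_i=x_j$ when $k$ is odd and $|x_i|=|x_j|$ when $k$ is even.
   Context: A $k$-uniform hyperstar of size $d$ is a hypergraph whose vertex set is a disjoint union $V=V_0\cup V_1\cup\cdots\cup V_d$ with $|V_0|=1$, $|V_1|=\cdots=|V_d|=k-1$, and edge set $\{V_0\cup V_i: i\in[d]\}$; the vertex in $V_0$ is the heart. For a $k$-uniform hypergraph with $d_i$ the number of edges containing $i$, the Laplacian tensor $\mathcal L=\mathcal D-\mathcal A$ ($\mathcal D$ diagonal with entries $d_i$, $\mathcal A$ with entries $\frac1{(k-1)!}$ at index tuples forming an edge and $0$ otherwise) satisfies $(\mathcal L\mathbf x^{k-1})_i=d_ix_i^{k-1}-\sum_{e\ni i}\prod_{s\in e\setminus\{i\}}x_s$. An H-eigenpair $(\lambda,\mathbf x)$ consists of $\lambda\in\mathbb R$ and $\mathbf x\in\mathbb R^n\setminus\{0\}$ with $(\mathcal L\mathbf x^{k-1})_i=\lambda x_i^{k-1}$ for all $i$. *)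

(* Defs.v *)
From HB Require Import structures.
From mathcomp Require Import all_boot all_order all_algebra.
From mathcomp Require Import reals.
Set Implicit Arguments. Unset Strict Implicit. Unset Printing Implicit Defensive.
Import Order.TTheory GRing.Theory Num.Theory.
Local Open Scope ring_scope.

Definition is_hyperstar (n k d : nat) (E : {set {set 'I_n}}) (h : 'I_n) : Prop :=
  exists B : 'I_d -> {set 'I_n},
    [/\ forall i, #|B i| = k.-1,
        forall i, h \notin B i,
        forall i j, i != j -> [disjoint B i & B j],
        forall v : 'I_n, v != h -> exists i, v \in B i &
        E = [set h |: B i | i : 'I_d]].

Definition hdeg (n : nat) (E : {set {set 'I_n}}) (i : 'I_n) : nat :=
  #|[set e in E | i \in e]|.

(* An order-k, dimension-n real tensor: a function of index sequences
   (only entries on sequences of length k are relevant). *)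
Definition tensor (R : Type) (n : nat) := seq 'I_n -> R.

Definition adj_tensor (R : realType) (n k : nat) (E : {set {set 'I_n}})
  : tensor R n := fun s =>
  if [&& size s == k, uniq s & [set u in s] \in E]
  then ((k.-1)`!%:R)^-1 else 0.

Definition deg_tensor (R : realType) (n k : nat) (E : {set {set 'I_n}})
  : tensor R n := fun s =>
  match s with
  | i :: _ => if (size s == k) && all (fun j => j == i) s
              then (hdeg E i)%:R else 0
  | [::] => 0
  end.

Definition lap_tensor (R : realType) (n k : nat) (E : {set {set 'I_n}})
  : tensor R n := fun s => deg_tensor R k E s - adj_tensor R k E s.

Definition tmul (R : realType) (n k : nat) (T : tensor R n) (x : 'I_n -> R)
  (i : 'I_n) : R :=
  \sum_(t : (k.-1).-tuple 'I_n) T (i :: tval t) * \prod_(s <- tval t) x s.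

Definition H_eigenpair (R : realType) (n k : nat) (T : tensor R n)
  (lam : R) (x : 'I_n -> R) : Prop :=
  (exists i, x i != 0) /\ forall i, tmul k T x i = lam * x i ^+ k.-1.

(* Main.v *)
Require Import Defs.
From HB Require Import structures.
From mathcomp Require Import all_boot all_order all_algebra.
From mathcomp Require Import reals.
From mathcomp Require Import ring.
Import Order.TTheory GRing.Theory Num.Theory.
Local Open Scope ring_scope.

Section S.
Variables (n k d : nat) (E : {set {set 'I_n}}) (h : 'I_n) (B : 'I_d -> {set 'I_n}).
Hypotheses (k1 : (1 <= k)%N) (hB1 : forall a, #|B a| = k.-1) (hB2 : forall a, h \notin B a)
  (hB3 : forall a b, a != b -> [disjoint B a & B b])
  (hE : E = [set h |: B a | a : 'I_d]).

Lemma inB_uniq a b i : i \in B a -> i \in B b -> a = b.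
Proof.
move=> ia ib; apply/eqP; apply/negP => /negP /hB3 /disjointFr /(_ ia).
by rewrite ib.
Qed.

Lemma edge_of i a e : i \in B a -> e \in E -> i \in e -> e = h |: B a.
Proof.
move=> ia; rewrite hE => /imsetP [b _ ->]; rewrite in_setU1 => /orP [/eqP ih|ib].
  by move: (hB2 a); rewrite -ih ia.
by rewrite (inB_uniq _ _ _ ia ib).
Qed.

Lemma cond_iff i a (t : k.-1.-tuple 'I_n) : i \in B a ->
  [&& size (i :: tval t) == k, uniq (i :: tval t) & [set u in i :: tval t] \in E]
  = all (fun u => u \in (h |: B a) :\ i) t && uniq t.
Proof.
move=> ia.
have -> : size (i :: tval t) == k by rewrite /= size_tuple prednK.
apply/idP/idP.
  case/and3P=> _ /= /andP [nit ut] inE'.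
  have iin : i \in [set u in i :: tval t] by rewrite inE mem_head.
  have eq := edge_of _ _ _ ia inE' iin.
  rewrite ut andbT; apply/allP => u ut'.
  rewrite !inE; apply/andP; split.
    by apply/eqP => ui; move: nit; rewrite -ui ut'.
  by rewrite -in_setU1 -eq inE in_cons ut' orbT.
case/andP => /allP aS ut.
have nit : i \notin tval t by apply/negP => /aS; rewrite !inE eqxx.
have ui : uniq (i :: tval t) by rewrite /= nit ut.
rewrite ui /=.
have -> : [set u in i :: tval t] = h |: B a.
  apply/eqP; rewrite eqEcard; apply/andP; split.
    apply/subsetP => u; rewrite inE in_cons => /orP [/eqP ->|/aS].
      by rewrite in_setU1 ia orbT.
    by rewrite inE => /andP [].
  rewrite cardsU1 hB2 hB1 cardsE (card_uniqP ui) /= size_tuple add1n prednK //.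
by rewrite hE; apply/imsetP; exists a.
Qed.


Lemma prod_nseq (R : realType) (x : 'I_n -> R) m i :
  \prod_(s <- nseq m i) x s = x i ^+ m.
Proof. by elim: m => [|m IH]; rewrite ?big_nil // big_cons IH exprS. Qed.

Lemma hdeg_leaf i a : i \in B a -> hdeg E i = 1%N.
Proof.
move=> ia; rewrite /hdeg (_ : [set e in E | i \in e] = [set h |: B a]) ?cards1 //.
apply/setP => e; rewrite !inE; apply/andP/eqP.
  by case=> eE ie; apply: edge_of ia eE ie.
move=> ->; split; last by rewrite in_setU1 ia orbT.
by rewrite hE; apply/imsetP; exists a.
Qed.

Lemma tmul_leaf (R : realType) x i a : i \in B a ->
  tmul k (lap_tensor R k E) x i = x i ^+ k.-1 - \prod_(s in (h |: B a) :\ i) x s.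
Proof.
move=> ia; rewrite /tmul.
rewrite /lap_tensor.
rewrite (eq_bigr (fun t : (k.-1).-tuple _ => deg_tensor R k E (i :: tval t) * \prod_(s <- tval t) x s - adj_tensor R k E (i :: tval t) * \prod_(s <- tval t) x s)); last first.
  by move=> t _; apply: mulrBl.
rewrite sumrB; congr (_ - _).
  rewrite (bigD1 (nseq_tuple k.-1 i)) //= [X in _ + X = _]big1 ?addr0.
    rewrite size_nseq prednK // eqxx /= all_nseq eqxx orbT (hdeg_leaf _ _ ia) mul1r.
    exact: prod_nseq.
  move=> t tne; rewrite /= size_tuple prednK // eqxx /= eqxx /=.
  case: ifP => [/all_pred1P et|_]; last by rewrite mul0r.
  move: tne; rewrite size_tuple in et.
  have -> : t = nseq_tuple k.-1 i by apply: val_inj; rewrite /= et.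
  by rewrite eqxx.
set S := (h |: B a) :\ i.
have cS : #|S| = k.-1.
  have := cardsD1 i (h |: B a); rewrite in_setU1 ia orbT cardsU1 hB2 hB1.
  by move=> /eqP; rewrite eqn_add2l => /eqP.
have cT : #|[pred t : k.-1.-tuple 'I_n | all (fun u => u \in S) t && uniq t]| = (k.-1)`!.
  rewrite -ffactnn -[X in X ^_ _]cS -(card_uniq_tuples k.-1 (fun u => u \in S)).
  by apply: eq_card => t; rewrite !inE.
rewrite (eq_bigr (fun t : k.-1.-tuple 'I_n => if all (fun u => u \in S) t && uniq t
    then ((k.-1)`!%:R)^-1 * \prod_(s in S) x s else 0)).
  rewrite -big_mkcond /= sumr_const cT -mulrnAl [X in X * _ = _](_ : _ = 1) ?mul1r //.
  rewrite -mulr_natr mulVf //.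
  by rewrite pnatr_eq0 -lt0n fact_gt0.
move=> t _; rewrite /adj_tensor (cond_iff _ _ _ ia).
case: ifP => [/andP [aS ut]|_]; last by rewrite mul0r.
congr (_ * _); rewrite big_uniq //; apply: eq_bigl => u.
have eqS : [set u in tval t] = S.
  apply/eqP; rewrite eqEcard; apply/andP; split.
    by apply/subsetP => v; rewrite inE => /(allP aS).
  by rewrite cS cardsE (card_uniqP ut) size_tuple.
by rewrite -eqS inE.
Qed.

Lemma prodS_split (R : realType) (x : 'I_n -> R) i a : i \in B a ->
  \prod_(s in (h |: B a) :\ i) x s = x h * \prod_(s in B a :\ i) x s.
Proof.
move=> ia; have hi : h != i by apply/eqP => hi; move: (hB2 a); rewrite hi ia.
rewrite (bigD1 h) /=; last by rewrite !inE hi eqxx.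
congr (_ * _); apply: eq_bigl => s; rewrite !inE.
case: (eqVneq s h) => [->|sh] /=; first by move: (hB2 a); case: (_ \in _); rewrite ?andbF.
by rewrite andbT.
Qed.

Lemma eig_leaf (R : realType) (lam : R) x i a : i \in B a ->
  tmul k (lap_tensor R k E) x i = lam * x i ^+ k.-1 ->
  (1 - lam) * x i ^+ k = \prod_(s in h |: B a) x s.
Proof.
move=> ia; rewrite (tmul_leaf _ _ _ _ ia) => eq.
rewrite (bigD1 i) /=; last by rewrite in_setU1 ia orbT.
rewrite (eq_bigl (fun s => s \in (h |: B a) :\ i)); last by move=> s; rewrite !inE andbC.
have -> : \prod_(s in (h |: B a) :\ i) x s = x i ^+ k.-1 - lam * x i ^+ k.-1.
  by rewrite -eq; ring.
by rewrite -{1}(prednK k1) exprS; ring.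
Qed.

Lemma eig_leaf2 (R : realType) (lam : R) x i a : i \in B a ->
  tmul k (lap_tensor R k E) x i = lam * x i ^+ k.-1 ->
  (1 - lam) * x i ^+ k.-1 = x h * \prod_(s in B a :\ i) x s.
Proof.
move=> ia; rewrite (tmul_leaf _ _ _ _ ia) (prodS_split _ _ _ _ ia) => eq.
have -> : x h * \prod_(s in B a :\ i) x s = x i ^+ k.-1 - lam * x i ^+ k.-1 by rewrite -eq; ring.
by ring.
Qed.

End S.

Lemma absXinj (R : realType) m (x y : R) : (0 < m)%N -> x ^+ m = y ^+ m -> `|x| = `|y|.
Proof.
move=> m0 e; apply/eqP; rewrite -(eqrXn2 m0) ?normr_ge0 //.
by rewrite -!normrX e.
Qed.

Lemma oddXinj (R : realType) m (x y : R) : odd m -> x ^+ m = y ^+ m -> x = y.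
Proof.
move=> om e; have m0 : (0 < m)%N by case: m om {e}.
have ax := absXinj _ _ _ _ m0 e.
have [x0|x0] := eqVneq x 0.
  by move: ax; rewrite x0 normr0 => /esym/eqP; rewrite normr_eq0 => /eqP ->.
have y0 : y != 0 by rewrite -normr_eq0 -ax normr_eq0.
have sg : Num.sg x = Num.sg y.
  by have := congr1 Num.sg e; rewrite !sgrX (sgr_odd _ x0) (sgr_odd _ y0) om !expr1.
by rewrite (numEsg x) (numEsg y) sg ax.
Qed.

Theorem lemma5p1 (R : realType) (n k d : nat) (E : {set {set 'I_n.+1}})
  (lam : R) (x : 'I_n.+1 -> R) :
  (3 <= k)%N -> (2 <= d)%N ->
  is_hyperstar k d E ord0 ->
  H_eigenpair k (lap_tensor R k E) lam x ->
  lam != 1 ->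
  (forall i j : 'I_n.+1, i != ord0 -> j != ord0 ->
     (exists2 e, e \in E & (i \in e) && (j \in e)) ->
     (odd k -> x i = x j) /\ (~~ odd k -> `|x i| = `|x j|)) /\
  (forall i j : 'I_n.+1, i != ord0 -> j != ord0 ->
     x i != 0 -> x j != 0 ->
     (odd k -> x i = x j) /\ (~~ odd k -> `|x i| = `|x j|)).
Proof.
move=> k3 _ [B [hB1 hB2 hB3 hcov hE]] [_ eig] lam1.
have k1 : (0 < k)%N by apply: leq_trans k3.
have l0 : 1 - lam != 0 by rewrite subr_eq0 eq_sym.
have EL := eig_leaf _ _ _ _ _ _ k1 hB1 hB2 hB3 hE R lam x.
have EL2 := eig_leaf2 _ _ _ _ _ _ k1 hB1 hB2 hB3 hE R lam x.
have same : forall i j a, i \in B a -> j \in B a ->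
    (odd k -> x i = x j) /\ (~~ odd k -> `|x i| = `|x j|).
  move=> i j a ia ja.
  have e : x i ^+ k = x j ^+ k.
    by apply: (mulfI l0); rewrite (EL i a ia (eig i)) (EL j a ja (eig j)).
  by split => [ok|_]; [apply: (oddXinj _ _ _ _ ok e) | apply: (absXinj _ _ _ _ k1 e)].
split.
  move=> i j i0 j0 [e eE /andP [ie je]].
  have [a ia] := hcov i i0.
  have ee := edge_of _ _ _ _ _ hB2 hB3 hE i a e ia eE ie.
  move: je; rewrite ee in_setU1 (negbTE j0) /= => ja.
  exact: same ia ja.
have key : forall i a, i \in B a -> x i != 0 ->
    (odd k -> (1 - lam) * x i = x ord0) /\ (~~ odd k -> `|1 - lam| * `|x i| = `|x ord0|).
  move=> i a ia xi0.
  have e2 := EL2 i a ia (eig i).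
  have cB : k.-1 = (#|B a :\ i|).+1.
    by rewrite -(hB1 a) (cardsD1 i (B a)) ia.
  have xm0 : x i ^+ #|B a :\ i| != 0 by rewrite expf_neq0.
  split => ok.
    have P : \prod_(s in B a :\ i) x s = x i ^+ #|B a :\ i|.
      rewrite -prodr_const; apply: eq_bigr => s; rewrite !inE => /andP [_ sa].
      by case: (same s i a sa ia) => /(_ ok).
    move: e2; rewrite P cB exprS => e2.
    by apply: (mulIf xm0); rewrite -e2 mulrA.
  have P : `|\prod_(s in B a :\ i) x s| = `|x i| ^+ #|B a :\ i|.
    rewrite normr_prod -prodr_const; apply: eq_bigr => s; rewrite !inE => /andP [_ sa].
    by case: (same s i a sa ia) => _ /(_ ok).
  move: e2 => /(congr1 (fun z => `|z|)); rewrite !normrM P normrX cB exprS => e2.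
  have xm0' : `|x i| ^+ #|B a :\ i| != 0 by rewrite -normrX normr_eq0.
  by apply: (mulIf xm0'); rewrite -e2 mulrA.
move=> i j i0 j0 xi0 xj0.
have [a ia] := hcov i i0; have [b jb] := hcov j j0.
have [ko ke] := key i a ia xi0; have [ko' ke'] := key j b jb xj0.
split => ok.
  by apply: (mulfI l0); rewrite ko // ko'.
have l0' : `|1 - lam| != 0 by rewrite normr_eq0.
by apply: (mulfI l0'); rewrite ke // ke'.
Qed.
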